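(* Let $K$ be a field of characteristic $p>0$, and let $\sigma,\tau$ be $K$-algebra automorphisms of the ring $\mathcal{D}(P_n)$ of differential operators on $P_n=K[x_1,\ldots,x_n]$. Then $\sigma=\tau$ if and only if $\sigma(x_i)=\tau(x_i)$ for all $i=1,\ldots,n$.
   Context: For $i=1,\ldots,n$ and $k\in\mathbb{N}$, $\partial_i^{[k]}=\partial_i^k/k!$ denotes the $K$-linear map of $P_n$ given by $\partial_i^{[k]}(x^m)=\binom{m_i}{k}x^{m-ke_i}$ (zero if $m_i<k$), where $x^m=x_1^{m_1}\cdots x_n^{m_n}$ and $e_1,\ldots,e_n$ is the standard basis of $\mathbb{Z}^n$. The ring $\mathcal{D}(P_n)$ is the subalgebra of $\mathrm{End}_K(P_n)$ generated by $P_n$ (acting by multiplication) and all $\partial_i^{[k]}$; one has $\mathcal{D}(P_n)=\bigoplus_{\alpha\in\mathbb{N}^n}P_n\partial^{[\alpha]}$ with $\partial^{[\alpha]}=\prod_i\partial_i^{[\alpha_i]}$. $\mathrm{Aut}_K(\mathcal{D}(P_n))$ is the group of $K$-algebra automorphisms. *)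

(* Defs.v *)
From HB Require Import structures.
From mathcomp Require Import all_boot all_order all_algebra.
From mathcomp Require Import mpoly.
Set Implicit Arguments. Unset Strict Implicit. Unset Printing Implicit Defensive.
Import GRing.Theory.
Local Open Scope ring_scope.

Section DiffOps.
Variables (n : nat) (K : fieldType).

(* P_n = K[x_1..x_n] and the K-linear endomorphisms are represented as
   functions P_n -> P_n (membership in D(P_n) forces K-linearity). *)
Definition Op := {mpoly K[n]} -> {mpoly K[n]}.

Definition mulOp (f : {mpoly K[n]}) : Op := fun g => f * g.

(* divided-power derivative  d_i^[k] (x^m) = C(m_i,k) x^(m - k e_i),
   extended K-linearly; when m_i < k the binomial is 0. *)
Definition ddiff (i : 'I_n) (k : nat) : Op := fun g =>
  \sum_(m <- msupp g)
     (g@_m * ('C(m i, k))%:R) *: 'X_[(m - (U_(i) *+ k))%MM].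

Definition addOp (a b : Op) : Op := fun g => a g + b g.
Definition compOp (a b : Op) : Op := fun g => a (b g).
Definition scaleOp (c : K) (a : Op) : Op := fun g => c *: a g.
Definition idOp : Op := fun g => g.

Inductive inD : Op -> Prop :=
  | inD_mul f : inD (mulOp f)
  | inD_dd i k : inD (ddiff i k)
  | inD_add a b : inD a -> inD b -> inD (addOp a b)
  | inD_comp a b : inD a -> inD b -> inD (compOp a b)
  | inD_scale c a : inD a -> inD (scaleOp c a).

(* sigma is (the action on D(P_n) of) a K-algebra automorphism of D(P_n) *)
Definition isAutD (s : Op -> Op) : Prop :=
  (forall a, inD a -> inD (s a)) /\
  (forall a b, inD a -> inD b -> s (addOp a b) = addOp (s a) (s b)) /\
  (forall a b, inD a -> inD b -> s (compOp a b) = compOp (s a) (s b)) /\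
  (forall c a, inD a -> s (scaleOp c a) = scaleOp c (s a)) /\
  s idOp = idOp /\
  (forall a b, inD a -> inD b -> s a = s b -> a = b) /\
  (forall b, inD b -> exists2 a, inD a & s a = b).

End DiffOps.

(* Main.v *)
Require Import Defs.
From mathcomp Require Import all_boot all_order all_algebra.
From mathcomp Require Import zify ring.
From mathcomp Require Import mpoly ssrcomplements.
From Stdlib Require Import FunctionalExtensionality.
Set Implicit Arguments. Unset Strict Implicit.
Set Warnings "-notation-overridden,-ambiguous-paths,-notation-incompatible-prefix".
Import GRing.Theory.
Lemma binM m k l : 'C(m, l) * 'C(m - l, k) = 'C(m, k + l) * 'C(k + l, k).
Proof.
have [le|lt] := leqP (k + l) m; last first.
  rewrite (bin_small lt) mul0n.
  have [ll|gl] := leqP l m; last by rewrite bin_small.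
  by rewrite (@bin_small (m - l)) ?muln0 //; lia.
have Hl : l <= m by lia.
have h1 := bin_fact Hl.
have h2 := @bin_fact (m - l) k ltac:(lia).
have h3 := bin_fact le.
have h4 := @bin_fact (k + l) k ltac:(lia).
have e1 : m - l - k = m - (k + l) by lia.
have e2 : k + l - k = l by lia.
rewrite e1 in h2; rewrite e2 in h4.
apply/eqP; rewrite -(eqn_pmul2r (fact_gt0 l)) -(eqn_pmul2r (fact_gt0 k)) -(eqn_pmul2r (fact_gt0 (m - (k + l)))).
apply/eqP.
transitivity ('C(m, l) * (l`! * ('C(m - l, k) * (k`! * (m - (k + l))`!)))); first by ring.
rewrite h2 h1 -h3 -h4; ring.
Qed.

Lemma binpk p k : 0 < k -> 'C(p * k, k) = p * 'C((p * k).-1, k.-1).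
Proof.
move=> k0; have := mul_bin_diag (p * k) k.-1; rewrite prednK //.
move=> E; apply/eqP; rewrite -(eqn_pmul2l k0) -E; apply/eqP; ring.
Qed.

Local Open Scope ring_scope.

Section L.
Variables (n : nat) (K : fieldType).
Implicit Types (f g h : {mpoly K[n]}).

Definition Lin (F : 'X_{1..n} -> {mpoly K[n]}) g :=
  \sum_(m <- msupp g) g@_m *: F m.

Lemma LinE F g k : (msize g <= k)%N ->
  Lin F g = \sum_(m : 'X_{1..n < k}) g@_m *: F m.
Proof.
move=> le; set I : subFinType _ := 'X_{1..n < k}.
rewrite /Lin (big_mksub I) ?msupp_uniq //=; first last.
  by move=> x /msize_mdeg_lt /leq_trans; apply.
rewrite big_rmcond //= => j /memN_msupp_eq0 ->.
by rewrite scale0r.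
Qed.

Lemma LinL F c f g : Lin F (c *: f + g) = c *: Lin F f + Lin F g.
Proof.
set k := maxn (msize (c *: f + g)) (maxn (msize f) (msize g)).
rewrite !(@LinE F _ k); last first.
- by rewrite /k !leq_max leqnn ?orbT.
- by rewrite /k !leq_max leqnn ?orbT.
- by rewrite /k !leq_max leqnn ?orbT.
rewrite scaler_sumr -big_split /=; apply: eq_bigr => m _.
by rewrite mcoeffD mcoeffZ scalerDl scalerA.
Qed.

Lemma LinX F m : Lin F 'X_[m] = F m.
Proof. by rewrite /Lin msuppX big_seq1 mcoeffX eqxx scale1r. Qed.

Lemma ddiffE i k : ddiff i k = Lin (fun m => ('C(m i, k))%:R *: 'X_[(m - (U_(i) *+ k))%MM]).
Proof.
apply: functional_extensionality => g; rewrite /ddiff /Lin; apply: eq_bigr => m _.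
by rewrite scalerA.
Qed.

Lemma ddiffX (i : 'I_n) k (m : 'X_{1..n}) : ddiff (K:=K) i k 'X_[m] = ('C(m i, k))%:R *: 'X_[(m - (U_(i) *+ k))%MM].
Proof. by rewrite ddiffE LinX. Qed.

Definition linOp (a : Op n K) := forall c f g, a (c *: f + g) = c *: a f + a g.

Lemma inD_lin a : inD a -> linOp a.
Proof.
elim => {a}.
- by move=> f c g h; rewrite /mulOp mulrDr scalerAr.
- by move=> i k c f g; rewrite ddiffE LinL.
- move=> a b _ Ha _ Hb c f g; rewrite /addOp Ha Hb scalerDr.
  by rewrite -!addrA; congr (_ + _); rewrite addrCA.
- by move=> a b _ Ha _ Hb c f g; rewrite /compOp Hb Ha.
- by move=> c' a _ Ha c f g; rewrite /scaleOp Ha scalerDr !scalerA mulrC.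
Qed.

Lemma lin0 a : linOp a -> a 0 = 0.
Proof.
move=> La; have := La 1 0 0; rewrite !scale1r addr0 => /eqP.
by rewrite -subr_eq0 opprD addrA subrr add0r oppr_eq0 => /eqP.
Qed.

Lemma linD a : linOp a -> forall f g, a (f + g) = a f + a g.
Proof. by move=> La f g; have := La 1 f g; rewrite !scale1r. Qed.

Lemma linZ a : linOp a -> forall c f, a (c *: f) = c *: a f.
Proof. by move=> La c f; rewrite -[c *: f]addr0 La (lin0 La) addr0. Qed.

Lemma lin_ext a b : linOp a -> linOp b -> (forall m, a 'X_[m] = b 'X_[m]) -> a = b.
Proof.
move=> La Lb H; apply: functional_extensionality => h.
elim/mpolyind: h => [|c m p _ _ IH]; first by rewrite !lin0.
by rewrite La Lb H IH.
Qed.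

Lemma ddiff0 (i : 'I_n) : ddiff (K:=K) i 0 = @idOp n K.
Proof.
apply: lin_ext; first by apply: inD_lin; constructor.
  by move=> c f g.
by move=> m; rewrite ddiffX bin0 scale1r; congr 'X_[_]; apply/mnmP => l; rewrite mnmBE mulmnE muln0 subn0.
Qed.

Lemma leib_ne (i j : 'I_n) k : i != j ->
  compOp (ddiff (K:=K) i k) (mulOp 'X_j) = compOp (mulOp 'X_j) (ddiff i k).
Proof.
move=> ij; apply: lin_ext; try by apply: inD_lin; do !constructor.
move=> m; rewrite /compOp /mulOp -mpolyXD ddiffX ddiffX -scalerAr -mpolyXD.
rewrite mnmDE mnm1E eq_sym (negbTE ij) add0n; congr (_ *: 'X_[_]).
apply/mnmP => l; rewrite !(mnmBE, mnmDE, mulmnE, mnm1E).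
by case: (eqVneq i l) => [<-|_]; rewrite ?(eq_sym j i) ?(negbTE ij) /= ?muln0 ?subn0.
Qed.

Lemma leib_eq (i : 'I_n) k :
  compOp (ddiff (K:=K) i k.+1) (mulOp 'X_i) =
  addOp (compOp (mulOp 'X_i) (ddiff i k.+1)) (ddiff i k).
Proof.
apply: lin_ext; try by apply: inD_lin; do !constructor.
move=> m; rewrite /compOp /mulOp /addOp -mpolyXD ddiffX ddiffX ddiffX -scalerAr -mpolyXD.
rewrite mnmDE mnm1E eqxx add1n binS natrD scalerDl.
have E1 : (U_(i) + m - U_(i) *+ k.+1 = m - U_(i) *+ k)%MM.
  apply/mnmP => l; rewrite !(mnmBE, mnmDE, mulmnE, mnm1E).
  by case: (eqVneq i l) => [<-|_] /=; rewrite ?muln1 ?add1n ?subSS // !muln0.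
rewrite E1; congr (_ + _).
have [lt|ge] := ltnP (m i) k.+1; first by rewrite bin_small // !scale0r.
congr (_ *: 'X_[_]); apply/mnmP => l; rewrite !(mnmBE, mnmDE, mulmnE, mnm1E).
case: (eqVneq i l) => [<-|_] /=; rewrite ?muln1 ?add1n ?muln0 ?subn0 //.
by rewrite !mul1n subnS prednK // subn_gt0.
Qed.

Lemma ddiff_nil (i : 'I_n) k p : p \in [pchar K] -> (0 < k)%N ->
  compOp (ddiff (K:=K) i k) (ddiff i (p.-1 * k)) = mulOp 0.
Proof.
move=> pc k0; have pp := pcharf_prime pc.
apply: lin_ext; try by apply: inD_lin; do !constructor.
move=> m; rewrite /compOp /mulOp mul0r ddiffX linZ; last by apply: inD_lin; constructor.
rewrite ddiffX scalerA mnmBE mulmnE mnm1E eqxx mul1n -natrM binM.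
have -> : (k + p.-1 * k = p * k)%N by rewrite -[X in (X + _)%N]mul1n -mulnDl add1n prednK // prime_gt0.
by rewrite binpk // mulnCA natrM (pcharf0 pc) mul0r scale0r.
Qed.

Lemma ddiff_nz (i : 'I_n) l : ddiff (K:=K) i l <> mulOp 0.
Proof.
move=> /(congr1 (fun F => F 'X_[U_(i) *+ l])); rewrite /mulOp mul0r ddiffX.
have -> : (U_(i) *+ l - U_(i) *+ l = 0)%MM by apply/mnmP => j; rewrite mnmBE subnn mnm0E.
rewrite mulmnE mnm1E eqxx mul1n binn scale1r mpolyX0 => /eqP.
by rewrite oner_eq0.
Qed.

Lemma msize_ddiff (i : 'I_n) k h : (0 < k)%N -> h != 0 ->
  (msize (ddiff (K:=K) i k h) < msize h)%N.
Proof.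
move=> k0 h0; rewrite /ddiff; apply: (leq_ltn_trans (msize_sum _ _ _)).
rewrite big_seq; elim/big_ind: _ => //.
- by rewrite lt0n msize_poly_eq0.
- by move=> x y hx hy; rewrite gtn_max hx hy.
move=> m hm; have [lt|ge] := ltnP (m i) k.
  by rewrite bin_small // mulr0 scale0r msize0 lt0n msize_poly_eq0.
apply: (leq_ltn_trans (msizeZ_le _ _)); rewrite msizeX.
apply: leq_trans (msize_mdeg_lt hm).
have le : (U_(i) *+ k <= m)%MM by apply/mnm_lepP => l; rewrite mulmnE mnm1E; case: (eqVneq i l) => [<-|_]; rewrite ?mul1n ?mul0n.
rewrite -{2}(submK le) mdegD mdegMn mdeg1 mul1n; lia.
Qed.

Lemma op_inj (i : 'I_n) k g h : (0 < k)%N -> g != 0 -> h != 0 ->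
  ddiff (K:=K) i k h + g * h != 0.
Proof.
move=> k0 g0 h0; apply/negP; rewrite addrC addr_eq0 => /eqP E.
have := msize_ddiff i k0 h0; rewrite -msizeN -E msizeM //.
have : (0 < msize g)%N by rewrite lt0n msize_poly_eq0.
move: (msize g) (msize h) => a b; lia.
Qed.

Lemma mpoly_gen (P : {mpoly K[n]} -> Prop) :
  P 1 -> (forall i, P 'X_i) -> (forall f g, P f -> P g -> P (f + g)) ->
  (forall f g, P f -> P g -> P (f * g)) -> (forall c f, P f -> P (c *: f)) ->
  forall f, P f.
Proof.
move=> P1 PX PD PM PZ f; elim/mpolyind: f => [|c m p _ _ IH].
  by rewrite -(scale0r 1); apply: PZ.
apply: PD => //; apply: PZ; rewrite mpolyXE_id; elim/big_ind: _ => // i _.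
by elim: (m i) => [|k IHk]; rewrite ?expr0 // exprS; apply: PM.
Qed.

Lemma comm_mul (e : Op n K) : linOp e ->
  (forall j, compOp e (mulOp 'X_j) = compOp (mulOp 'X_j) e) -> e = mulOp (e 1).
Proof.
move=> Le C.
have H : forall f h, e (f * h) = f * e h.
  apply: (mpoly_gen (P := fun f => forall h, e (f * h) = f * e h)).
  - by move=> h; rewrite !mul1r.
  - by move=> j h; have := congr1 (fun F => F h) (C j).
  - by move=> f g Hf Hg h; rewrite mulrDl (linD Le) Hf Hg mulrDl.
  - by move=> f g Hf Hg h; rewrite -mulrA Hf Hg mulrA.
  - by move=> c f Hf h; rewrite -scalerAl (linZ Le) Hf scalerAl.
apply: functional_extensionality => h; by rewrite /mulOp -{1}[h]mulr1 H mulrC.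
Qed.

Lemma comm_diff (A B s C : Op n K) : linOp s ->
  (forall h, A (s h) = s (A h) + C h) -> (forall h, B (s h) = s (B h) + C h) ->
  compOp (addOp A (scaleOp (-1) B)) s = compOp s (addOp A (scaleOp (-1) B)).
Proof.
move=> Ls HA HB; apply: functional_extensionality => h.
rewrite /compOp /addOp /scaleOp HA HB (linD Ls) (linZ Ls) !scaleN1r opprD.
by rewrite addrACA subrr addr0.
Qed.
End L.

Ltac dtac := repeat match goal with
  | |- inD (mulOp _) => apply: inD_mul
  | |- inD (ddiff _ _) => apply: inD_dd
  | |- inD (addOp _ _) => apply: inD_add
  | |- inD (compOp _ _) => apply: inD_comp
  | |- inD (scaleOp _ _) => apply: inD_scale
  | H : inD ?a |- inD ?a => exact: H
  end.

Section Main.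
Variables (n : nat) (K : fieldType).
Local Notation Z := (@mulOp n K 0).

Lemma aut0 (s : Op n K -> Op n K) : isAutD s -> s Z = Z.
Proof.
move=> [Din [Hadd _]].
have E : addOp Z Z = Z by apply: functional_extensionality => h; rewrite /addOp /mulOp mul0r addr0.
have := Hadd Z Z (inD_mul _) (inD_mul _); rewrite E => H.
apply: functional_extensionality => h; have := congr1 (fun F => F h) H.
rewrite /addOp => /eqP; rewrite -subr_eq0 opprD addrA subrr add0r oppr_eq0 => /eqP ->.
by rewrite /mulOp mul0r.
Qed.

Lemma aut_mul (s t : Op n K -> Op n K) : isAutD s -> isAutD t ->
  (forall i : 'I_n, s (mulOp 'X_i) = t (mulOp 'X_i)) ->
  forall f, s (mulOp f) = t (mulOp f).
Proof.
move=> [sD [sA [sC [sZ [sI _]]]]] [tD [tA [tC [tZ [tI _]]]]] HX.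
apply: mpoly_gen => //.
- have -> : mulOp (1 : {mpoly K[n]}) = @idOp n K.
    by apply: functional_extensionality => h; rewrite /mulOp mul1r.
  by rewrite sI tI.
- move=> f g Hf Hg; have -> : mulOp (f + g) = addOp (mulOp f) (mulOp g).
    by apply: functional_extensionality => h; rewrite /mulOp /addOp mulrDl.
  by rewrite (sA _ _ (inD_mul f) (inD_mul g)) (tA _ _ (inD_mul f) (inD_mul g)) Hf Hg.
- move=> f g Hf Hg; have -> : mulOp (f * g) = compOp (mulOp f) (mulOp g).
    by apply: functional_extensionality => h; rewrite /mulOp /compOp mulrA.
  by rewrite (sC _ _ (inD_mul f) (inD_mul g)) (tC _ _ (inD_mul f) (inD_mul g)) Hf Hg.
- move=> c f Hf; have -> : mulOp (c *: f) = scaleOp c (mulOp f).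
    by apply: functional_extensionality => h; rewrite /mulOp /scaleOp scalerAl.
  by rewrite (sZ _ _ (inD_mul f)) (tZ _ _ (inD_mul f)) Hf.
Qed.

Lemma aut_dd (p : nat) (s t : Op n K -> Op n K) : p \in [pchar K] ->
  isAutD s -> isAutD t ->
  (forall i : 'I_n, s (mulOp 'X_i) = t (mulOp 'X_i)) ->
  forall k (i : 'I_n), s (ddiff i k) = t (ddiff i k).
Proof.
move=> pc Hs Ht HX; have Hm := aut_mul Hs Ht HX.
have [sD [sA [sC [sZ [sI [sInj sSurj]]]]]] := Hs.
have [tD [tA [tC [tZ [tI [tInj tSurj]]]]]] := Ht.
elim=> [|k IH] i; first by rewrite ddiff0 sI tI.
have rel : forall u, isAutD u -> forall (j : 'I_n) h,
    u (ddiff i k.+1) (u (mulOp 'X_j) h) =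
    u (mulOp 'X_j) (u (ddiff i k.+1) h) + (if i == j then u (ddiff i k) else Z) h.
  move=> u [uD [uA [uC _]]] j h; case: (eqVneq i j) => [<-|ij].
    have := congr1 (fun F => F h) (congr1 u (@leib_eq n K i k)).
    rewrite (uC _ _ (@inD_dd n K i k.+1) (inD_mul 'X_i)).
    rewrite (uA _ _ (inD_comp (inD_mul _) (@inD_dd n K _ _)) (@inD_dd n K _ _)).
    by rewrite (uC _ _ (inD_mul _) (@inD_dd n K _ _)).
  have := congr1 (fun F => F h) (congr1 u (@leib_ne n K i j k.+1 ij)).
  rewrite (uC _ _ (@inD_dd n K i k.+1) (inD_mul _)) (uC _ _ (inD_mul _) (@inD_dd n K _ _)).
  by rewrite /compOp /mulOp mul0r addr0.
set A := s (ddiff i k.+1); set B := t (ddiff i k.+1).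
have DA : inD A := sD _ (@inD_dd n K _ _).
have DB : inD B := tD _ (@inD_dd n K _ _).
pose d := addOp A (scaleOp (-1) B).
have Dd : inD d by rewrite /d; dtac.
have [e De sed] := sSurj d Dd.
have Ce : forall j, compOp e (mulOp 'X_j) = compOp (mulOp 'X_j) e.
  move=> j; apply: sInj; try by dtac.
  rewrite (sC _ _ De (inD_mul _)) (sC _ _ (inD_mul _) De).
  rewrite sed; apply: (comm_diff (C := if i == j then s (ddiff i k) else Z)).
  - exact: inD_lin (sD _ (inD_mul _)).
  - by move=> h; apply: rel.
  - move=> h; rewrite /B HX IH; exact: (rel t Ht).
have eg := comm_mul (inD_lin De) Ce.
set g := e 1 in eg.
have Eq : A = t (addOp (ddiff i k.+1) (mulOp g)).
  rewrite (tA _ _ (@inD_dd n K _ _) (inD_mul _)).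
  rewrite -Hm -eg sed; apply: functional_extensionality => h.
  by rewrite /addOp /d /addOp /scaleOp scaleN1r addrC subrK.
have [g0|gn0] := eqVneq g 0.
  rewrite Eq; congr t; apply: functional_extensionality => h.
  by rewrite /addOp /mulOp g0 mul0r addr0.
exfalso.
have N := @ddiff_nil n K i k.+1 p pc (ltn0Sn k).
have := congr1 s N; rewrite (sC _ _ (@inD_dd n K _ _) (@inD_dd n K _ _)).
rewrite (aut0 Hs) -/A.
have [q Dq tq] := tSurj _ (sD _ (@inD_dd n K i (p.-1 * k.+1))).
rewrite -tq Eq -(tC _ _ (inD_add (@inD_dd n K _ _) (inD_mul _)) Dq).
rewrite -(aut0 Ht) => /tInj H.
have qz : q = Z.
  apply: functional_extensionality => h; rewrite /mulOp mul0r.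
  apply/eqP; apply/negPn/negP => qh.
  have := @op_inj n K i k.+1 _ _ (ltn0Sn k) gn0 qh.
  have := congr1 (fun F => F h) (H ltac:(dtac) ltac:(dtac)).
  by rewrite /compOp /addOp /mulOp mul0r => ->; rewrite eqxx.
move: tq; rewrite qz (aut0 Ht) -(aut0 Hs) => tq.
by apply: (@ddiff_nz n K i (p.-1 * k.+1)); symmetry; apply: (sInj _ _ (inD_mul 0) (@inD_dd n K _ _) tq).
Qed.
End Main.

Theorem theorem1p1 (K : fieldType) (p : nat) (charK : p \in [pchar K])
    (n : nat) (sigma tau : Op n K -> Op n K) :
  isAutD sigma -> isAutD tau ->
  ((forall a : Op n K, inD a -> sigma a = tau a) <->
   (forall i : 'I_n, sigma (mulOp 'X_i) = tau (mulOp 'X_i))).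
Proof.
move=> Hs Ht; split.
  by move=> H i; apply: H; apply: inD_mul.
move=> HX a Da; have Hm := aut_mul Hs Ht HX; have Hd := aut_dd charK Hs Ht HX.
have [sD [sA [sC [sZ _]]]] := Hs; have [tD [tA [tC [tZ _]]]] := Ht.
elim: Da => {a}.
- exact: Hm.
- by move=> i k; apply: Hd.
- by move=> a b Da Ea Db Eb; rewrite sA // tA // Ea Eb.
- by move=> a b Da Ea Db Eb; rewrite sC // tC // Ea Eb.
- by move=> c a Da Ea; rewrite sZ // tZ // Ea.
Qed.
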